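(* Let $(X,\kappa)$ be a finite digital image and $f:X\to X$ a continuous self-map with $L(f)\neq 0$. Then either $f$ has a fixed point, or $f$ has at least two approximate fixed points.
   Context: A digital image is a pair $(X,\kappa)$ where $X$ is a set and $\kappa$ is a symmetric irreflexive relation on $X$ (the adjacency). Write $x\leftrightarrow y$ if adjacent, $x\Leftrightarrow y$ if adjacent or equal. A map $f$ is continuous if $x\leftrightarrow y$ implies $f(x)\Leftrightarrow f(y)$. A point $x$ is an approximate fixed point of $f:X\to X$ if $f(x)\Leftrightarrow x$. Simplicial homology: a $q$-simplex of $X$ is a set of $q+1$ pairwise adjacent points. $C_q(X)$ is the free abelian group generated by ordered $q$-simplices $\langle x_0,\dots,x_q\rangle$ modulo $\langle x_{\rho(0)},\dots,x_{\rho(q)}\rangle=\operatorname{sgn}(\rho)\langle x_0,\dots,x_q\rangle$, with boundary $\partial\langle x_0,\dots,x_q\rangle=\sum_{i=0}^q(-1)^i\langle x_0,\dots,\widehat{x_i},\dots,x_q\rangle$; $H_q(X)$ is its homology. For continuous $f$, $f_q\langle p_0,\dots,p_q\rangle=\langle f(p_0),\dots,f(p_q)\rangle$ (interpreted as $0$ if the image has fewer than $q+1$ points); this is a chain map inducing $f_{*,q}$ on $H_q$. The simplicial Lefschetz number of a self-map $f$ of a finite image is $L(f)=\sum_{q\ge0}(-1)^q\operatorname{tr}(f_{*,q})$, traces taken on $H_q(X)\otimes\mathbb Q$. *)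

(* Defs.v *)
From HB Require Import structures.
From mathcomp Require Import all_boot all_order all_algebra.
Set Implicit Arguments. Unset Strict Implicit. Unset Printing Implicit Defensive.
Import Order.TTheory GRing.Theory Num.Theory.
Local Open Scope ring_scope.

Section DigitalImage.
Variables (X : finType) (e : rel X).

Definition adj_eq (x y : X) : bool := (x == y) || e x y.

Definition dcontinuous (f : X -> X) : Prop :=
  forall x y, e x y -> adj_eq (f x) (f y).

Definition approx_fixed (f : X -> X) (x : X) : Prop := adj_eq (f x) x.

Definition simplex (s : {set X}) : bool :=
  (0 < #|s|)%N && [forall x in s, forall y in s, (x != y) ==> e x y].

Definition qsimplex (q : nat) (s : {set X}) : bool := simplex s && (#|s| == q.+1)%N.

(* Chains are row vectors indexed by {set X}; the basis vector at a simplex s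
   is the oriented simplex <x_0,...,x_q> with x_0 < ... < x_q listed in the
   order of [enum s] (i.e. increasing enum_rank). *)
Definition N := #|{set X}|.
Definition idx (s : {set X}) : 'I_N := enum_rank s.

(* boundary matrix: row s, column t = coefficient of <t> in boundary <s> *)
Definition bnd : 'M[rat]_N :=
  \matrix_(i < N, j < N)
    let s := enum_val i in let t := enum_val j in
    if [&& simplex s, simplex t, t \subset s & (#|t|.+1 == #|s|)%N]
    then \sum_(x in s :\: t) (-1) ^+ (index x (enum s))
    else 0.

Definition inversions (f : X -> X) (s : {set X}) : nat :=
  #|[set p : X * X | [&& p.1 \in s, p.2 \in s,
        (enum_rank p.1 < enum_rank p.2)%N & (enum_rank (f p.2) < enum_rank (f p.1))%N]]|.

(* chain map f_# : row s, column t = coefficient of <t> in f_#<s>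
   (0 if f(s) has fewer points than s; otherwise sign of the sorting permutation) *)
Definition chainmap (f : X -> X) : 'M[rat]_N :=
  \matrix_(i < N, j < N)
    let s := enum_val i in let t := enum_val j in
    if [&& simplex s, f @: s == t & #|t| == #|s|]
    then (-1) ^+ (inversions f s) else 0.

Definition chains (q : nat) : 'M[rat]_N :=
  diag_mx (\row_(i < N) (if qsimplex q (enum_val i) then 1 else 0)).

Definition cycles (q : nat) : 'M[rat]_N := (chains q :&: kermx bnd)%MS.
Definition boundaries (q : nat) : 'M[rat]_N := chains q.+1 *m bnd.

(* trace of the map induced by f_# on H_q(X;Q) = Z_q / B_q, computed on
   the complement W of Z_q :&: B_q in Z_q, with the projection along B_q *)
Definition htrace (f : X -> X) (q : nat) : rat :=
  let W := (cycles q :\: boundaries q)%MS in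
  let Bw := row_base W in
  \tr (Bw *m chainmap f *m proj_mx W (boundaries q) *m pinvmx Bw).

(* simplicial Lefschetz number (q-simplices exist only for q < #|X|) *)
Definition lefschetz (f : X -> X) : rat :=
  \sum_(q < #|X|.+1) (-1) ^+ q * htrace f q.

End DigitalImage.

(* Main.v *)
Require Import Defs.
From mathcomp Require Import all_boot all_order all_algebra ring.
Set Implicit Arguments. Unset Strict Implicit. Unset Printing Implicit Defensive.
Import Order.TTheory GRing.Theory Num.Theory.
Local Open Scope ring_scope.

Section LinAlg.
Variables (F : fieldType) (n : nat) (A : 'M[F]_n).

Definition isP (P U : 'M[F]_n) := (P <= U)%MS /\ U *m P = U.

Lemma isP_fix m P U (v : 'M[F]_(m,n)) : isP P U -> (v <= U)%MS -> v *m P = v.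
Proof. by move=> [_ UP] /submxP[x ->]; rewrite -mulmxA UP. Qed.

Definition prU (U : 'M[F]_n) := pinvmx U *m U.
Lemma isP_prU U : isP (prU U) U.
Proof. split; first exact: submxMl. by rewrite /prU mulmxA mulmxKpV. Qed.

Definition trs U := \tr (prU U *m A).

Lemma tr_indep U P Q : (U *m A <= U)%MS -> isP P U -> isP Q U ->
  \tr (P *m A) = \tr (Q *m A).
Proof.
move=> sA hP hQ.
have QP : Q *m P = Q by apply: isP_fix hP hQ.1.
have PAU : (P *m A <= U)%MS by apply: submx_trans (submxMr A hP.1) sA.
by rewrite -{1}(isP_fix hQ PAU) mxtrace_mulC mulmxA QP.
Qed.

Lemma trs_eq U P : (U *m A <= U)%MS -> isP P U -> \tr (P *m A) = trs U.
Proof. by move=> sA hP; apply: tr_indep sA hP (isP_prU U). Qed.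

Lemma trs0 : trs 0 = 0.
Proof. by rewrite /trs /prU !mulmx0 mul0mx mxtrace0. Qed.

Lemma L1 (Z B : 'M[F]_n) : (B <= Z)%MS -> (Z *m A <= Z)%MS -> (B *m A <= B)%MS ->
  trs Z = trs B + \tr (row_base (Z :\: B)%MS *m A *m proj_mx (Z :\: B)%MS B
                        *m pinvmx (row_base (Z :\: B)%MS)).
Proof.
move=> BZ sZ sB.
set W := (Z :\: B)%MS; set Bw := row_base W.
set G := prU Z; set PW := proj_mx W B; set P1 := pinvmx Bw *m Bw.
have dx : (W :&: B = 0)%MS by apply: capmx_diff.
have ZWB : (Z <= W + B)%MS.
  have h : (Z <= W + Z :&: B)%MS by rewrite addsmx_diff_cap_eq.
  apply: submx_trans h _; apply: addsmxS => //; exact: capmxSr.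
have GZ := isP_prU Z.
have hQB : isP (G - G *m PW) B.
  split; first by apply: proj_mx_compl_sub; apply: submx_trans GZ.1 ZWB.
  by rewrite mulmxBr (isP_fix GZ BZ) mulmxA (isP_fix GZ BZ) proj_mx_0 // subr0.
have -> : trs Z = \tr (G *m PW *m A) + \tr ((G - G *m PW) *m A).
  by rewrite -mxtraceD -mulmxDl addrC subrK.
rewrite (trs_eq sB hQB) addrC; congr (_ + _).
have P1fix m (v : 'M[F]_(m,n)) : (v <= W)%MS -> v *m P1 = v.
  by move=> vW; rewrite /P1 mulmxA mulmxKpV // eq_row_base.
have QW1 : G *m PW *m P1 = G *m PW by apply: P1fix; exact: proj_mx_sub.
have P1Z : (P1 *m A <= Z)%MS.
  apply: submx_trans (submxMr A _) sZ.
  apply: submx_trans (submxMl _ _) _; rewrite /Bw eq_row_base; exact: diffmxSl.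
rewrite -QW1 -mulmxA mxtrace_mulC mulmxA (isP_fix GZ P1Z).
by rewrite [RHS]mxtrace_mulC; congr (\tr _); rewrite /P1 !mulmxA.
Qed.

Lemma L2 (C D : 'M[F]_n) : C *m C = C -> C *m A = A *m C -> A *m D = D *m A ->
  \tr (C *m A) = trs (C :&: kermx D)%MS + trs (C *m D).
Proof.
move=> CC CA AD.
set Z := (C :&: kermx D)%MS; set U' := (C :\: Z)%MS.
set PZ := proj_mx Z U'; set G := C *m PZ; set E := C - G; set K := C *m D.
have ZC : (Z <= C)%MS by apply: capmxSl.
have fixC m (v : 'M[F]_(m,n)) : (v <= C)%MS -> v *m C = v.
  by case/submxP=> x ->; rewrite -mulmxA CC.
have dx : (Z :&: U' = 0)%MS by rewrite capmxC capmx_diff.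
have sZ : (Z *m A <= Z)%MS.
  rewrite sub_capmx; apply/andP; split.
    by rewrite -(fixC _ _ ZC) -mulmxA CA mulmxA submxMl.
  rewrite sub_kermx -mulmxA AD mulmxA.
  have /sub_kermxP -> : (Z <= kermx D)%MS by apply: capmxSr.
  by rewrite mul0mx.
have GZ : (G <= Z)%MS by rewrite proj_mx_sub.
have hG : isP G Z by split => //; rewrite /G mulmxA (fixC _ _ ZC) proj_mx_id.
have GC : (G <= C)%MS by apply: submx_trans GZ ZC.
rewrite -(trs_eq sZ hG).
have -> : \tr (C *m A) = \tr (G *m A) + \tr (E *m A).
  by rewrite -mxtraceD -mulmxDl /E addrC subrK.
congr (_ + _).
have GD : G *m D = 0 by apply/sub_kermxP; apply: submx_trans GZ (capmxSr _ _).
have ED : E *m D = K by rewrite /E mulmxBl GD subr0.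
have CG : C *m G = G by rewrite /G mulmxA CC.
have GC' : G *m C = G by apply: fixC.
have GG : G *m G = G by rewrite {2}/G mulmxA GC' proj_mx_id.
have CE : C *m E = E by rewrite /E mulmxBr CC CG.
have EC : E *m C = E by rewrite /E mulmxBl CC GC'.
have EE : E *m E = E.
  by rewrite {1}/E mulmxBl CE /E mulmxBr GC' GG subrr subr0.
have EkZ m (v : 'M[F]_(m,n)) : (v <= Z)%MS -> v *m E = 0.
  move=> vZ; rewrite /E mulmxBr (fixC _ _ (submx_trans vZ ZC)) /G mulmxA.
  by rewrite (fixC _ _ (submx_trans vZ ZC)) proj_mx_id // subrr.
have key m (c : 'M[F]_(m,n)) : (c <= C)%MS -> c *m D *m pinvmx K *m E = c *m E.
  move=> cC; set x := c *m D *m pinvmx K.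
  have cK : (c *m D <= K)%MS by rewrite -(fixC _ _ cC) -mulmxA submxMl.
  have xK : x *m K = c *m D by rewrite /x mulmxKpV.
  have vZ : (x *m C - c <= Z)%MS.
    rewrite sub_capmx; apply/andP; split.
      by rewrite addmx_sub ?submxMl // eqmx_opp.
    by rewrite sub_kermx mulmxBl -mulmxA -/K xK subrr.
  move/EkZ: vZ; rewrite mulmxBl -mulmxA CE => /eqP; rewrite subr_eq0 => /eqP.
  done.
have EAC : (E *m A <= C)%MS by rewrite -EC -mulmxA CA mulmxA submxMl.
rewrite /trs /prU.
have h1 : K *m A = E *m E *m A *m D by rewrite -ED EE -!mulmxA AD.
have h2 : pinvmx K *m (E *m E *m A *m D) = (pinvmx K *m E) *m (E *m A *m D).
  by rewrite !mulmxA.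
rewrite -mulmxA h1 h2 [RHS]mxtrace_mulC mulmxA (key _ _ EAC).
by rewrite [RHS]mxtrace_mulC mulmxA EE.
Qed.

End LinAlg.
Section Hopf.
Variables (F : fieldType) (n : nat) (A D : 'M[F]_n) (P : nat -> 'M[F]_n).
Hypotheses (PP : forall q, P q *m P q = P q) (PA : forall q, P q *m A = A *m P q)
  (PD : forall q, P q.+1 *m D = D *m P q) (DD : D *m D = 0)
  (AD : A *m D = D *m A) (P0D : P 0 *m D = 0).

Definition hq q :=
  \tr (row_base ((P q :&: kermx D) :\: (P q.+1 *m D))%MS *m A
        *m proj_mx ((P q :&: kermx D) :\: (P q.+1 *m D))%MS (P q.+1 *m D)
        *m pinvmx (row_base ((P q :&: kermx D) :\: (P q.+1 *m D))%MS)).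

Lemma hopf_q q : \tr (P q *m A) = hq q + trs A (P q.+1 *m D) + trs A (P q *m D).
Proof.
rewrite (L2 (PP q) (PA q) AD) (@L1 _ _ A _ (P q.+1 *m D)).
- by rewrite /hq [trs A (P q.+1 *m D) + _]addrC.
- rewrite sub_capmx; apply/andP; split; first by rewrite PD submxMl.
  by rewrite sub_kermx -mulmxA DD mulmx0.
- rewrite sub_capmx; apply/andP; split.
    have /submxP[x ->] : (P q :&: kermx D <= P q)%MS by apply: capmxSl.
    by rewrite -mulmxA PA mulmxA submxMl.
  rewrite sub_kermx -mulmxA AD mulmxA.
  have /sub_kermxP -> : (P q :&: kermx D <= kermx D)%MS by apply: capmxSr.
  by rewrite mul0mx.
- by rewrite -mulmxA -AD mulmxA PA -mulmxA submxMl.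
Qed.

Lemma hopf m : P m.+1 = 0 ->
  \sum_(q < m.+1) (-1) ^+ q * \tr (P q *m A) = \sum_(q < m.+1) (-1) ^+ q * hq q.
Proof.
move=> Ptop.
pose b q := trs A (P q *m D).
have -> : \sum_(q < m.+1) (-1) ^+ q * \tr (P q *m A) =
   \sum_(q < m.+1) (-1) ^+ q * hq q +
   \sum_(q < m.+1) ((-1) ^+ q * b q - (-1) ^+ q.+1 * b q.+1).
  rewrite -big_split /=; apply: eq_bigr => q _.
  by rewrite hopf_q /b exprS; ring.
suff -> : \sum_(q < m.+1) ((-1) ^+ q * b q - (-1) ^+ q.+1 * b q.+1) = 0 by rewrite addr0.
have -> : \sum_(q < m.+1) ((-1) ^+ q * b q - (-1) ^+ q.+1 * b q.+1) =
   b 0 - (-1) ^+ m.+1 * b m.+1.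
  elim: m {Ptop} => [|m IH]; first by rewrite big_ord1 expr0 mul1r.
  by rewrite big_ord_recr /= IH; ring.
by rewrite /b Ptop P0D mul0mx trs0 mulr0 subrr.
Qed.
End Hopf.

Definition sg (b : bool) : rat := (-1) ^+ b.

Lemma sg_prod_count (T : eqType) (q : pred T) (l : seq T) :
  (-1) ^+ count q l = \prod_(y <- l) sg (q y) :> rat.
Proof.
elim: l => [|a l IH]; first by rewrite big_nil.
by rewrite big_cons /= exprD IH.
Qed.

Lemma sg_card (T : finType) (P : pred T) :
  (-1) ^+ #|P| = \prod_(x : T) sg (P x) :> rat.
Proof.
rewrite cardE /enum_mem size_filter sg_prod_count.
by rewrite /index_enum; case: index_enum_key => /=.
Qed.

Lemma index_filter (T : eqType) (p : pred T) (l : seq T) x :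
  uniq l -> x \in l -> p x ->
  index x (filter p l) = count (fun y => p y && (index y l < index x l)%N) l.
Proof.
elim: l => [//|a l IH] /= /andP[al ul] xl px.
have [ax|ax] := eqVneq a x.
  subst a; rewrite px /= eqxx /= add0n.
  by rewrite (@eq_count _ _ pred0) ?count_pred0 // => y /=; rewrite ltn0 andbF.
rewrite inE eq_sym (negPf ax) /= in xl.
rewrite eqxx /=.
have -> : count (fun y => p y && ((if a == y then 0 else (index y l).+1) < (index x l).+1)%N) l =
          count (fun y => p y && (index y l < index x l)%N) l.
  apply: eq_in_count => y yl /=.
  by have -> : (a == y) = false by apply/negbTE; apply: contraNneq al => ->.
case: (p a) => /=; last by rewrite IH.
by rewrite (negPf ax) IH.
Qed.

Section Comb.
Variable X : finType.

Definition rk (x : X) : nat := enum_rank x.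
Definition lt (x y : X) : bool := (rk x < rk y)%N.

Lemma rkE y : rk y = index y (enum X).
Proof.
rewrite /rk /enum_rank enum_rank_in.unlock insubdK // unfold_in cardE index_mem mem_enum; by rewrite inE.
Qed.

Lemma rk_inj : injective rk.
Proof. by move=> x y /val_inj /enum_rank_inj. Qed.


Lemma idx_sign (s : {set X}) x : x \in s ->
  (-1) ^+ index x (enum s) = \prod_(y in s) sg (lt y x) :> rat.
Proof.
move=> xs.
have -> : enum s = filter (mem s) (enum X) by rewrite enumT /enum_mem.
rewrite index_filter ?enum_uniq ?mem_enum // sg_prod_count.
rewrite big_enum /= [RHS]big_mkcond /=.
apply: eq_big => // y _; rewrite /lt !rkE.
by case: (y \in s).
Qed.
End Comb.

Module C2.

Lemma sumN (X : finType) (G : {set X} -> rat) :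
  \sum_(j < N X) G (enum_val j) = \sum_(t : {set X}) G t.
Proof. by rewrite /N -(big_enum_val (A := {set X})). Qed.

Lemma sgF : sg false = 1. Proof. by []. Qed.
Lemma sgT : sg true = -1. Proof. by rewrite /sg expr1. Qed.

Lemma P1 (a b c d : nat) : a != b -> c != d ->
  sg ((a < b)%N && (d < c)%N) * sg ((b < a)%N && (c < d)%N) * sg (d < c)%N = sg (b < a)%N.
Proof.
move=> ab cd; rewrite /sg -!signr_addb.
case: (ltngtP a b) ab => // _ _; case: (ltngtP c d) cd => //.
Qed.

Lemma P2 (b a0 a1 c d : nat) : b != a0 -> b != a1 -> d != c ->
  sg (b < a0)%N * (sg ((a1 < b)%N && (d < c)%N) * sg ((b < a1)%N && (c < d)%N)) =
  sg (b < a1)%N * (sg ((a0 < b)%N && (d < c)%N) * sg ((b < a0)%N && (c < d)%N)).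
Proof.
move=> h0 h1 h2; rewrite /sg -!signr_addb.
case: (ltngtP b a0) h0 => // _ _; case: (ltngtP b a1) h1 => // _ _;
  case: (ltngtP d c) h2 => //.
Qed.

Lemma sumAnti (T : finType) (s : {set T}) (Tm : T -> T -> rat) :
  {in s &, forall x z, Tm x z = - Tm z x} ->
  \sum_(x in s) \sum_(z in s) Tm x z = 0.
Proof.
move=> anti; set S := \sum_(x in s) _.
have : S = - S.
  rewrite {1}/S exchange_big /S -sumrN; apply: eq_bigr => z zs.
  rewrite -sumrN; apply: eq_bigr => x xs; exact: anti.
move=> h; have : S *+ 2 = 0 by rewrite mulr2n {1}h addNr.
by move/eqP; rewrite mulrn_eq0 /= => /eqP.
Qed.

Lemma setD1C (T : finType) (s : {set T}) x z : s :\ x :\ z = s :\ z :\ x.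
Proof. by apply/setP => y; rewrite !inE; case: (y == x); case: (y == z). Qed.

Section Main.
Variables (X : finType) (e : rel X) (f : X -> X).
Hypotheses (f_cont : dcontinuous e f).

Local Notation simp := (simplex e).

Definition bndF (s t : {set X}) : rat :=
  if [&& simp s, simp t, t \subset s & (#|t|.+1 == #|s|)%N]
  then \sum_(x in s :\: t) (-1) ^+ (index x (enum s)) else 0.

Lemma bndE i j : bnd e i j = bndF (enum_val i) (enum_val j).
Proof. by rewrite mxE. Qed.

Definition chF (s t : {set X}) : rat :=
  if [&& simp s, f @: s == t & #|t| == #|s|] then (-1) ^+ inversions f s else 0.

Lemma chE i j : chainmap e f i j = chF (enum_val i) (enum_val j).
Proof. by rewrite mxE. Qed.

Definition F2 a b := sg (lt a b && lt (f b) (f a)).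
Definition eps (s : {set X}) := \prod_(a in s) \prod_(b in s) F2 a b.
Definition sgi (s : {set X}) x := \prod_(y in s) sg (lt y x).

Lemma inv_sign s : (-1) ^+ inversions f s = eps s.
Proof.
rewrite /inversions cardsE sg_card /eps [RHS]big_mkcond /=.
under [RHS]eq_bigr do rewrite big_mkcond /=.
transitivity (\prod_i \prod_j (if (i \in s) && (j \in s) then F2 i j else 1)).
  rewrite pair_bigA; apply: eq_bigr => [[a b]] _ /=.
  by rewrite /F2 /lt /rk; case: (a \in s); case: (b \in s).
apply: eq_bigr => i _; case: (i \in s) => //=; by rewrite big1.
Qed.
End Main.

End C2.
Import C2.

Section Main2.
Variables (X : finType) (e : rel X) (f : X -> X).
Hypotheses (f_cont : dcontinuous e f).
Local Notation simp := (simplex e).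
Local Notation bndF := (bndF e).

Lemma simplex_sub (s t : {set X}) : simp s -> t \subset s -> simp t = (0 < #|t|)%N.
Proof.
move=> /andP[_ /forall_inP Hs] ts; rewrite /simplex.
case: (0 < #|t|)%N => //=.
apply/forall_inP => x xt; apply/forall_inP => y yt.
exact: (forall_inP (Hs x (subsetP ts x xt)) y (subsetP ts y yt)).
Qed.

Lemma simplex_img s : simp s -> simp (f @: s).
Proof.
move=> /andP[s0 /forall_inP Hs]; apply/andP; split.
  by rewrite card_gt0 imset_eq0 -card_gt0.
apply/forall_inP => a /imsetP[x xs ->]; apply/forall_inP => b /imsetP[y ys ->].
apply/implyP => neq.
have xy : x != y by apply: contraNneq neq => ->.
have exy := implyP (forall_inP (Hs x xs) y ys) xy.
by have := f_cont exy; rewrite /adj_eq (negPf neq).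
Qed.

Lemma face_ex (s t : {set X}) : t \subset s -> (#|t|.+1 == #|s|)%N ->
  exists2 x, x \in s & t = s :\ x.
Proof.
move=> ts /eqP ct.
have : #|s :\: t| == 1%N by rewrite cardsD (setIidPr ts) -ct subSn // subnn.
case/cards1P => x sx.
have xst : x \in s :\: t by rewrite sx set11.
move: (xst); rewrite inE => /andP[xt xs].
exists x => //; apply/setP => y; rewrite !inE.
case yt: (y \in t).
  rewrite (subsetP ts y yt) andbT; apply/esym/negP => /eqP yx.
  by rewrite -yx yt in xt.
case ys: (y \in s); rewrite ?andbF // andbT.
have : y \in s :\: t by rewrite inE yt ys.
by rewrite sx inE => ->.
Qed.

Lemma sum_faces s (G : {set X} -> rat) : simp s ->
  \sum_t bndF s t * G t =
  \sum_(x in s) (if simp (s :\ x) then sgi s x * G (s :\ x) else 0).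
Proof.
move=> Ss.
have bF x : x \in s -> bndF s (s :\ x) = if simp (s :\ x) then sgi s x else 0.
  move=> xs; rewrite /C2.bndF Ss subD1set /= (cardsD1 x s) xs add1n eqxx andbT.
  case: (simp (s :\ x)) => //.
  have -> : s :\: (s :\ x) = [set x].
    apply/setP => y; rewrite !inE; case: (y =P x) => [->|_] /=; first by rewrite xs.
    by case: (y \in s).
  by rewrite big_set1 idx_sign.
transitivity (\sum_(x in s) bndF s (s :\ x) * G (s :\ x)); last first.
  apply: eq_bigr => x xs; rewrite bF //; by case: (simp (s :\ x)); rewrite ?mul0r.
rewrite -(big_imset (fun t => bndF s t * G t) (h := fun x => s :\ x)) /=; last first.
  move=> x y xs ys /setP /(_ x); rewrite !inE eqxx xs andbT /=.
  by rewrite andbT => /esym /negbFE /eqP.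
rewrite [RHS]big_mkcond /=; apply: eq_bigr => t _.
case: ifP => // ti; rewrite /C2.bndF.
case: ifP => [/and4P[_ _ ts ct]|]; last by rewrite mul0r.
case: (face_ex ts ct) => x xs tE.
by move: ti; rewrite tE (imset_f (fun y => s :\ y) xs).
Qed.

Lemma bndF_faces s u : simp s -> bndF s u =
  \sum_(x in s) (if simp (s :\ x) && (s :\ x == u) then sgi s x else 0).
Proof.
move=> Ss; have := sum_faces (fun t => (t == u)%:R) Ss.
rewrite (bigD1 u) //= eqxx mulr1 big1 ?addr0 => [->|t /negPf->]; last by rewrite mulr0.
apply: eq_bigr => x _; case: (simp _); case: (_ == u); by rewrite ?mulr1 ?mulr0.
Qed.

Lemma lt_irr (x : X) : lt x x = false. Proof. by rewrite /lt ltnn. Qed.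

Lemma sg_lt_anti (x z : X) : x != z -> sg (lt z x) = - sg (lt x z).
Proof.
move=> xz; have : rk x != rk z by apply: contra xz => /eqP/rk_inj ->.
rewrite /lt /sg; case: ltngtP => //; by rewrite ?opprK.
Qed.

Lemma sgi2 (s : {set X}) x z : x \in s -> z \in s -> x != z ->
  sgi s x * sgi (s :\ x) z =
  sg (lt z x) * (\prod_(y in s :\ x :\ z) sg (lt y x) * \prod_(y in s :\ x :\ z) sg (lt y z)).
Proof.
move=> xs zs xz.
have zx : z \in s :\ x by rewrite in_setD1 eq_sym xz zs.
have xz' : x \in s :\ z by rewrite in_setD1 xz xs.
rewrite /sgi (big_setD1 z zs) (big_setD1 x xz') (big_setD1 z zx) /= !lt_irr sgF.
rewrite (setD1C s z x); ring.
Qed.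

Lemma sgiD (s : {set X}) x z : x \in s -> z \in s -> x != z ->
  sgi s x * sgi (s :\ x) z = - (sgi s z * sgi (s :\ z) x).
Proof.
move=> xs zs xz; have zx : z != x by rewrite eq_sym.
rewrite (sgi2 xs zs xz) (sgi2 zs xs zx) (setD1C s z x) (sg_lt_anti xz).
ring.
Qed.

Lemma DD : bnd e *m bnd e = 0.
Proof.
apply/matrixP => i k; rewrite !mxE.
under eq_bigr do rewrite !bndE.
rewrite (sumN (fun t => bndF (enum_val i) t * bndF t (enum_val k))).
set s := enum_val i; set u := enum_val k.
case Ss: (simp s); last first.
  by rewrite big1 // => t _; rewrite /C2.bndF Ss /= mul0r.
rewrite sum_faces //.
pose Tm x z := if (z != x) && simp (s :\ x :\ z) && (s :\ x :\ z == u)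
               then sgi s x * sgi (s :\ x) z else 0.
transitivity (\sum_(x in s) \sum_(z in s) Tm x z); last first.
  apply: sumAnti => x z xs zs.
  case: (eqVneq x z) => [<-|xz]; first by rewrite /Tm eqxx /= oppr0.
  rewrite /Tm eq_sym xz (setD1C s x z) /=.
  by case: ifP => _; [exact: sgiD | rewrite oppr0].
apply: eq_bigr => x xs.
case Sx: (simp (s :\ x)).
  rewrite bndF_faces // big_distrr [RHS](big_setD1 x xs) /=.
  have -> : Tm x x = 0 by rewrite /Tm eqxx.
  rewrite add0r.
  apply: eq_bigr => z; rewrite in_setD1 => /andP[zx _]; rewrite /Tm zx /=.
  by case: ifP; rewrite ?mulr0.
rewrite big1 // => z zs; rewrite /Tm.
case: ifP => // /andP[/andP[_ Sxz] _].
have sub2 : s :\ x :\ z \subset s :\ x by apply: subD1set.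
move: Sx; rewrite (simplex_sub Ss (subD1set s x)).
move: Sxz; rewrite (simplex_sub Ss (subset_trans sub2 (subD1set s x))).
by move=> h1; rewrite (leq_trans h1 (subset_leq_card sub2)).
Qed.

Local Notation F2 := (F2 f).
Local Notation eps := (eps f).
Local Notation chF := (chF e f).

Lemma epsD1 (t : {set X}) z : z \in t ->
  eps t = eps (t :\ z) * \prod_(q in t :\ z) (F2 z q * F2 q z).
Proof.
move=> zt; rewrite /C2.eps (big_setD1 z zt) /= (big_setD1 z zt) /=.
rewrite {1}/C2.F2 lt_irr /= sgF mul1r.
have h : \prod_(a in t :\ z) \prod_(b in t) F2 a b =
   \prod_(a in t :\ z) F2 a z * \prod_(a in t :\ z) \prod_(b in t :\ z) F2 a b.
  by rewrite -big_split; apply: eq_bigr => a _; rewrite (big_setD1 z zt).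
rewrite h big_split /=; ring.
Qed.

Lemma sgi_2 (s : {set X}) x z : x \in s -> z \in s -> x != z ->
  sgi s x = sg (lt z x) * \prod_(y in s :\ x :\ z) sg (lt y x).
Proof.
move=> xs zs xz; have zx : z \in s :\ x by rewrite in_setD1 eq_sym xz zs.
by rewrite /sgi (big_setD1 x xs) (big_setD1 z zx) /= lt_irr sgF mul1r.
Qed.

Lemma I1 (s : {set X}) x : x \in s -> {in s &, injective f} ->
  eps s * sgi (f @: s) (f x) = sgi s x * eps (s :\ x).
Proof.
move=> xs injf.
rewrite (epsD1 xs) /sgi big_imset //= (big_setD1 x xs) [in RHS](big_setD1 x xs) /=.
rewrite !lt_irr sgF !mul1r -mulrA -big_split [RHS]mulrC; congr (_ * _).
apply: eq_bigr => q; rewrite in_setD1 => /andP[qx qs].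
have h1 : rk x != rk q by apply/eqP => /rk_inj h; rewrite h eqxx in qx.
have h2 : rk (f x) != rk (f q).
  by apply/eqP => /rk_inj /(injf _ _ xs qs) h; rewrite h eqxx in qx.
rewrite /C2.F2 /lt; exact: (P1 h1 h2).
Qed.

Lemma I2 (s : {set X}) x0 x1 : x0 \in s -> x1 \in s -> x0 != x1 -> f x0 = f x1 ->
  {in s :\ x0 &, injective f} ->
  sgi s x0 * eps (s :\ x0) = - (sgi s x1 * eps (s :\ x1)).
Proof.
move=> x0s x1s x01 fx injf.
have x10 : x1 != x0 by rewrite eq_sym.
have x1' : x1 \in s :\ x0 by rewrite in_setD1 x10 x1s.
have x0' : x0 \in s :\ x1 by rewrite in_setD1 x01 x0s.
rewrite (epsD1 x1') (epsD1 x0') (sgi_2 x0s x1s x01) (sgi_2 x1s x0s x10).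
rewrite (setD1C s x1 x0) (sg_lt_anti x01).
set P := s :\ x0 :\ x1.
have key : \prod_(y in P) sg (lt y x0) * \prod_(q in P) (F2 x1 q * F2 q x1) =
           \prod_(y in P) sg (lt y x1) * \prod_(q in P) (F2 x0 q * F2 q x0).
  rewrite -!big_split; apply: eq_bigr => q; rewrite !in_setD1 => /and3P[qx1 qx0 qs].
  have qs' : q \in s :\ x0 by rewrite in_setD1 qx0 qs.
  have h0 : rk q != rk x0 by apply/eqP => /rk_inj h; rewrite h eqxx in qx0.
  have h1 : rk q != rk x1 by apply/eqP => /rk_inj h; rewrite h eqxx in qx1.
  have h2 : rk (f q) != rk (f x0).
    by apply/eqP; rewrite fx => /rk_inj /(injf _ _ qs' x1') h; rewrite h eqxx in qx1.
  rewrite /C2.F2 /lt -fx; exact: (P2 h0 h1 h2).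
transitivity (- sg (lt x0 x1) * eps P *
   (\prod_(y in P) sg (lt y x0) * \prod_(q in P) (F2 x1 q * F2 q x1))); first ring.
rewrite key; ring.
Qed.

Lemma img_D1 (s : {set X}) x : x \in s -> {in s &, injective f} ->
  f @: s :\ f x = f @: (s :\ x).
Proof.
move=> xs injf; apply/eqP; rewrite eqEsubset; apply/andP; split; apply/subsetP => y.
  rewrite in_setD1 => /andP[yfx /imsetP[z zs yE]]; rewrite yE in yfx *.
  apply: imset_f; rewrite in_setD1 zs andbT.
  by apply: contraNneq yfx => ->.
case/imsetP => z; rewrite in_setD1 => /andP[zx zs] ->.
rewrite in_setD1 imset_f // andbT.
by apply: contraNneq zx => /(injf _ _ zs xs) ->.
Qed.

Lemma img_coll (s : {set X}) x0 x1 : x0 \in s -> x1 \in s -> x0 != x1 ->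
  f x0 = f x1 -> f @: (s :\ x0) = f @: s.
Proof.
move=> x0s x1s x01 fx; apply/eqP; rewrite eqEsubset imsetS ?subD1set //=.
apply/subsetP => y /imsetP[z zs ->].
case: (eqVneq z x0) => [->|zx].
  by rewrite fx; apply: imset_f; rewrite in_setD1 eq_sym x01 x1s.
by apply: imset_f; rewrite in_setD1 zx zs.
Qed.

Lemma ch_sum s (G : {set X} -> rat) :
  \sum_t chF s t * G t =
  if simp s && (#|f @: s| == #|s|) then eps s * G (f @: s) else 0.
Proof.
rewrite (bigD1 (f @: s)) //= big1 ?addr0 => [|t tne]; last first.
  by rewrite /C2.chF eq_sym (negPf tne) andbF /= mul0r.
rewrite /C2.chF eqxx inv_sign.
by case: (simp s); case: (_ == _); rewrite /= ?mul0r.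
Qed.

Lemma ADc : chainmap e f *m bnd e = bnd e *m chainmap e f.
Proof.
apply/matrixP => i k; rewrite !mxE.
under eq_bigr do rewrite chE bndE.
under [RHS]eq_bigr do rewrite bndE chE.
rewrite (sumN (fun t => chF (enum_val i) t * bndF t (enum_val k))).
rewrite (sumN (fun t => bndF (enum_val i) t * chF t (enum_val k))).
rewrite ch_sum; set s := enum_val i; set u := enum_val k.
case Ss: (simp s); last first.
  by rewrite /= big1 // => t _; rewrite /C2.bndF Ss /= mul0r.
rewrite sum_faces //=.
case: (boolP (#|f @: s| == #|s|)) => inj.
  have injf : {in s &, injective f} by apply/imset_injP.
  rewrite bndF_faces ?simplex_img // big_imset //= big_distrr; apply: eq_bigr => x xs /=.
  rewrite (img_D1 xs injf).
  have Sfx : simp (f @: (s :\ x)) = simp (s :\ x).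
    rewrite (simplex_sub (simplex_img Ss) (imsetS f (subD1set s x))).
    by rewrite (simplex_sub Ss (subD1set s x)) !card_gt0 imset_eq0.
  rewrite Sfx; case Sx: (simp (s :\ x)); last by rewrite /= mulr0.
  rewrite /C2.chF Sx /=.
  have cardx : #|f @: (s :\ x)| = #|s :\ x|.
    apply/eqP/imset_injP => a b ha hb; apply: injf; exact: (subsetP (subD1set s x)).
  have [<-|ne] := eqVneq (f @: (s :\ x)) u; last by rewrite /= !mulr0.
  by rewrite cardx eqxx inv_sign /= (I1 xs injf).
have [x0 [x1 [x0s x1s x01 fx]]] :
    exists x0 x1, [/\ x0 \in s, x1 \in s, x0 != x1 & f x0 = f x1].
  case: (boolP [exists x0 in s, exists x1 in s, (x0 != x1) && (f x0 == f x1)]).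
    case/exists_inP => x0 x0s /exists_inP [x1 x1s /andP[h1 /eqP h2]].
    by exists x0, x1.
  move=> H; exfalso; move/negP: inj; apply; apply/imset_injP => a b ains bins fab.
  apply/eqP; apply: contraNT H => ab; apply/exists_inP; exists a => //.
  by apply/exists_inP; exists b => //; rewrite ab fab eqxx.
have x10 : x1 != x0 by rewrite eq_sym.
have x1' : x1 \in s :\ x0 by rewrite in_setD1 x10 x1s.
have x0' : x0 \in s :\ x1 by rewrite in_setD1 x01 x0s.
rewrite (big_setD1 x0 x0s) (big_setD1 x1 x1') /= big1 ?addr0; last first.
  move=> x; rewrite !in_setD1 => /and3P[xx1 xx0 xs].
  case: ifP => // _; rewrite /C2.chF; case: ifP => [|_]; last by rewrite mulr0.
  move=> /and3P[_ /eqP fu cu]; exfalso.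
  have injx : {in s :\ x &, injective f} by apply/imset_injP; rewrite fu.
  have a0 : x0 \in s :\ x by rewrite in_setD1 eq_sym xx0 x0s.
  have a1 : x1 \in s :\ x by rewrite in_setD1 eq_sym xx1 x1s.
  by have := injx _ _ a0 a1 fx; move/eqP; rewrite (negPf x01).
have S0 : simp (s :\ x0).
  by rewrite (simplex_sub Ss (subD1set s x0)) card_gt0; apply/set0Pn; exists x1.
have S1 : simp (s :\ x1).
  by rewrite (simplex_sub Ss (subD1set s x1)) card_gt0; apply/set0Pn; exists x0.
have c01 : #|s :\ x1| = #|s :\ x0|.
  have c0 := cardsD1 x0 s; have c1 := cardsD1 x1 s.
  rewrite x0s in c0; rewrite x1s c0 in c1.
  by apply/esym/eqP; move/eqP: c1; rewrite eqn_add2l.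
rewrite S0 S1 /C2.chF S0 S1 (img_coll x0s x1s x01 fx) (img_coll x1s x0s x10 (esym fx)) c01 /=.

case: ifP => [/andP[/eqP fu cu]|_]; last by rewrite !mulr0 addr0.
rewrite !inv_sign (I2 x0s x1s x01 fx) ?addNr //.
by apply/imset_injP; rewrite (img_coll x0s x1s x01 fx) fu.
Qed.

End Main2.

Section Fin.
Variables (X : finType) (e : rel X) (f : X -> X).
Hypotheses (f_cont : dcontinuous e f).
Local Notation simp := (simplex e).

Lemma chainsE q i j : chains e q i j =
  (if qsimplex e q (enum_val i) then 1 else 0) *+ (i == j).
Proof. by rewrite !mxE. Qed.

Lemma PPc q : chains e q *m chains e q = chains e q.
Proof.
apply/matrixP => i j; rewrite mul_diag_mx !mxE.
by case: (qsimplex e q _); case: (i == j); rewrite /= ?mul1r ?mul0r.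
Qed.

Lemma PAc q : chains e q *m chainmap e f = chainmap e f *m chains e q.
Proof.
apply/matrixP => i j; rewrite mul_diag_mx mul_mx_diag mxE [RHS]mxE chE !mxE.
rewrite /C2.chF.
case: (boolP [&& simp (enum_val i), f @: enum_val i == enum_val j
                & #|enum_val j| == #|enum_val i|]) => [/and3P[Ss /eqP st /eqP ct]|_]; last first.
  by rewrite mulr0 mul0r.
have -> : qsimplex e q (enum_val j) = qsimplex e q (enum_val i).
  by rewrite /qsimplex ct -st (simplex_img f_cont Ss) Ss.
by rewrite mulrC.
Qed.

Lemma PDc q : chains e q.+1 *m bnd e = bnd e *m chains e q.
Proof.
apply/matrixP => i j; rewrite mul_diag_mx mul_mx_diag mxE [RHS]mxE bndE !mxE.
rewrite /C2.bndF.
case: (boolP [&& simp (enum_val i), simp (enum_val j), enum_val j \subset enum_val i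
                & #|enum_val j|.+1 == #|enum_val i|]) => [/and4P[Ss St _ /eqP ct]|_]; last first.
  by rewrite mulr0 mul0r.
have -> : qsimplex e q.+1 (enum_val i) = qsimplex e q (enum_val j).
  by rewrite /qsimplex Ss St -ct eqSS.
by rewrite mulrC.
Qed.

Lemma P0Dc : chains e 0 *m bnd e = 0.
Proof.
apply/matrixP => i j; rewrite mul_diag_mx mxE bndE !mxE /C2.bndF.
case: ifP => [/andP[_ /eqP c1]|_]; last by rewrite mul0r.
case: ifP => [/and4P[_ /andP[t0 _] _ /eqP ct]|_]; last by rewrite mulr0.
by move: t0; rewrite c1 in ct; case: ct => ->.
Qed.

Lemma Ptopc : chains e #|X|.+1 = 0.
Proof.
apply/matrixP => i j; rewrite !mxE /qsimplex.
case: ifP => [/andP[_ /eqP c]|_]; last by rewrite mul0rn.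
have h := max_card (mem (enum_val i)); rewrite c in h.
by have := leq_trans (leqnSn _) h; rewrite ltnn.
Qed.

Lemma trc q : (forall s, simp s -> f @: s != s) ->
  \tr (chains e q *m chainmap e f) = 0.
Proof.
move=> H; rewrite /mxtrace big1 // => i _; rewrite mul_diag_mx mxE chE !mxE /C2.chF.
case: (boolP [&& simp (enum_val i), f @: enum_val i == enum_val i
                & #|enum_val i| == #|enum_val i|]) => [/and3P[Ss st _]|_]; last by rewrite mulr0.
by move: (H _ Ss); rewrite st.
Qed.
End Fin.

Theorem corollary3p4 (X : finType) (e : rel X)
  (e_sym : symmetric e) (e_irr : irreflexive e)
  (f : X -> X) (f_cont : dcontinuous e f)
  (hL : lefschetz e f != 0%R) :
  (exists x, f x = x) \/
  (exists x y, x != y /\ approx_fixed e f x /\ approx_fixed e f y).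
Proof.
have [fx|nofx] := boolP [exists x, f x == x].
  by left; case/existsP: fx => x /eqP fx; exists x.
have [ap|noap] := boolP [exists x, exists y,
    [&& x != y, adj_eq e (f x) x & adj_eq e (f y) y]].
  by right; case/existsP: ap => x /existsP[y /and3P[xy ax ay]]; exists x, y.
exfalso; move/eqP: hL; apply.
have H : forall s, simplex e s -> f @: s != s.
  move=> s Ss; apply/negP => /eqP fs.
  have [x xs] : exists x, x \in s.
    by case/andP: Ss; rewrite card_gt0 => /set0Pn.
  have apx y : y \in s -> adj_eq e (f y) y.
    move=> ys; rewrite /adj_eq; have fys : f y \in s by rewrite -fs imset_f.
    case: eqVneq => //= fy; case/andP: Ss => _ /forall_inP Hs.
    exact: (implyP (forall_inP (Hs _ fys) y ys) fy).
  case: (boolP [exists y in s, y != x]).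
    case/exists_inP => y ys yx; move/negP: noap; apply.
    by apply/existsP; exists x; apply/existsP; exists y; rewrite eq_sym yx !apx.
  move=> noy; move/negP: nofx; apply; apply/existsP; exists x.
  have fxs : f x \in s by rewrite -fs imset_f.
  case: (eqVneq (f x) x) => // fxx; exfalso; move/negP: noy; apply.
  by apply/exists_inP; exists (f x).
rewrite /lefschetz.
have -> : \sum_(q < #|X|.+1) (-1) ^+ q * htrace e f q =
   \sum_(q < #|X|.+1) (-1) ^+ q * hq (chainmap e f) (bnd e) (chains e) q by [].
rewrite -(@hopf _ _ (chainmap e f) (bnd e) (chains e) (PPc e) (PAc f_cont)
   (PDc e) (DD e) (ADc f_cont) (P0Dc e) #|X| (Ptopc e)).
by rewrite big1 // => q _; rewrite trc ?mulr0.
Qed.
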